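(* Let $M\ge1$. Then $\kappa(\mathsf{S}_M)=\mathfrak{L}_M$, and for every $k\in\mathfrak{L}_M$, $$\{\beta(\mathsf{p}):\mathsf{p}\in\mathsf{S}_M,\ \kappa(\mathsf{p})=k\}=\{b\in\mathbb{Z}^{M+1}:\min\{\mathbb{1},\tilde k\}\le b\le\min\{k,\tilde k\}\},$$ equivalently the Cartesian product $V_0\times\cdots\times V_M$ with $V_n=\{\min\{1,\tilde k_n\},\ldots,\min\{k_n,\tilde k_n\}\}$.
   Context: Scattering sequences: $\mathsf{S}_M$ is the set of integer sequences $\mathsf{p}=(i_0,\ldots,i_L)$ with $L\ge2$, $i_0=i_L=-1$, $i_j\in\{0,\ldots,M\}$ for $1\le j\le L-1$, and $|i_{j+1}-i_j|=1$ for $0\le j\le L-1$ ($i_j=m$ means the pulse is at depth $z_m$). Transit count vector $\kappa(\mathsf{p})=(k_0,\ldots,k_M)$: for $0\le n\le M$, $k_n$ is the number of maximal blocks of consecutive indices $j\in\{0,\ldots,L\}$ with $i_j\ge n$. Branch count vector $\beta(\mathsf{p})=(b_0,\ldots,b_M)$: $b_n$ is the number of those maximal blocks containing at least two indices. $\mathfrak{L}_M\subset\mathbb{Z}^{M+1}_{\geq0}$: all $k$ with $k_0=1$ and $k_n>0\Rightarrow k_{n-1}>0$ ($1\le n\le M$). $\tilde k=(k_1,\ldots,k_M,0)$; $\mathbb{1}=(1,\ldots,1)$; inequalities and $\min$ are entrywise. *)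

(* Defs.v *)
From HB Require Import structures.
From mathcomp Require Import all_boot all_order all_algebra.
Set Implicit Arguments. Unset Strict Implicit. Unset Printing Implicit Defensive.
Import Order.TTheory GRing.Theory Num.Theory.

(* A sequence p = (i_0, ..., i_L) is represented as a list of integers of
   length L+1; its j-th entry is nth 0 p j. *)
Local Open Scope ring_scope.

Definition ent (p : seq int) (j : nat) : int := nth 0 p j.

Definition scattering_seq (M : nat) (p : seq int) : Prop :=
  [/\ (3 <= size p)%N,
      ent p 0 = -1, ent p (size p).-1 = -1,
      (forall j : nat, (0 < j)%N -> (j < (size p).-1)%N ->
          0 <= ent p j <= M%:Z)
    & (forall j : nat, (j.+1 < size p)%N ->
          `|ent p j.+1 - ent p j| = 1)].

Definition is_block (n : int) (p : seq int) (a b : nat) : bool :=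
  [&& (a <= b)%N, (b < size p)%N,
      [forall j : 'I_(size p), ((a <= j)%N && (j <= b)%N) ==> (n <= ent p j)],
      (a == 0%N) || (ent p a.-1 < n)
    & (b == (size p).-1) || (ent p b.+1 < n)].

Definition nblocks (n : int) (p : seq int) : nat :=
  (\sum_(a < size p) \sum_(b < size p) is_block n p a b)%N.

Definition nbranches (n : int) (p : seq int) : nat :=
  (\sum_(a < size p) \sum_(b < size p) ((a < b)%N && is_block n p a b))%N.

Definition kappa (M : nat) (p : seq int) : {ffun 'I_M.+1 -> nat} :=
  [ffun n : 'I_M.+1 => nblocks (n : nat)%:Z p].

Definition beta (M : nat) (p : seq int) : {ffun 'I_M.+1 -> nat} :=
  [ffun n : 'I_M.+1 => nbranches (n : nat)%:Z p].

Definition LM (M : nat) (k : {ffun 'I_M.+1 -> nat}) : Prop :=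
  k ord0 = 1%N /\
  (forall n : 'I_M.+1, (1 <= n)%N -> (0 < k n)%N -> (0 < k (inord n.-1))%N).

Definition ktilde (M : nat) (k : {ffun 'I_M.+1 -> nat}) (n : 'I_M.+1) : nat :=
  if (n < M)%N then k (inord n.+1) else 0%N.

(* Main.v *)
Require Import Defs.
From HB Require Import structures.
From mathcomp Require Import all_boot all_order all_algebra zify.
Import Order.TTheory GRing.Theory Num.Theory.
Set Implicit Arguments. Unset Strict Implicit. Unset Printing Implicit Defensive.
Open Scope ring_scope.

Definition startb (n : int) (p : seq int) (a : nat) : bool :=
  [&& (a < size p)%N, n <= ent p a & (a == 0%N) || (ent p a.-1 < n)].

Lemma block_start n p a b : is_block n p a b -> startb n p a.
Proof.
case/and5P=> hab hb /forallP hall hs he.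
have ha : (a < size p)%N by apply: leq_ltn_trans hb.
apply/and3P; split=> //.
by have := hall (Ordinal ha); rewrite /= leqnn hab.
Qed.

Lemma block_uniq n p a b b' : is_block n p a b -> is_block n p a b' -> b = b'.
Proof.
wlog: b b' / (b <= b')%N.
  move=> W H1 H2; case: (leqP b b') => h; first exact: W.
  by symmetry; apply: W => //; apply: ltnW.
move=> hle H1 H2; apply/eqP; rewrite eqn_leq hle /= leqNgt; apply/negP=> hlt.
case/and5P: H1 => hab hb _ _ he.
case/and5P: H2 => hab' hb' /forallP hall _ _.
have hs : (b.+1 < size p)%N by apply: leq_ltn_trans hb'.
have := hall (Ordinal hs); rewrite /= hlt (leq_trans hab) //= => hn.
move: he; have -> : (b == (size p).-1) = false by apply/eqP; lia.
by rewrite /= ltNge hn.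
Qed.

Lemma block_end n p a : startb n p a -> exists b, is_block n p a b.
Proof.
case/and3P=> ha hna hs.
pose P := fun b => (a <= b)%N && ((b == (size p).-1) || (ent p b.+1 < n)).
have exP : exists b, P b by exists (size p).-1; rewrite /P eqxx /= andbT; lia.
case: (ex_minnP exP) => b0 /andP[hab0 he] hmin.
have hb0 : (b0 < size p)%N.
  have := hmin (size p).-1; rewrite /P eqxx /= andbT => h.
  have : (b0 <= (size p).-1)%N by apply: h; lia.
  lia.
have claim : forall t, (a + t <= b0)%N -> n <= ent p (a + t).
  elim=> [|t IH] h; first by rewrite addn0.
  have h1 : n <= ent p (a + t) by apply: IH; lia.
  have : ~~ P (a + t).
    apply/negP=> hP; have := hmin _ hP; lia.
  rewrite /P leq_addr /= negb_or -leNgt => /andP[_].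
  by rewrite addnS.
exists b0; apply/and5P; split=> //.
apply/forallP=> j; apply/implyP=> /andP[h1 h2].
have e : (a + (j - a))%N = j by lia.
by have := claim (j - a)%N; rewrite e; apply; lia.
Qed.

Lemma sum_blocks n p (a : 'I_(size p)) :
  (\sum_(b < size p) is_block n p a b)%N = startb n p a.
Proof.
case: (boolP (startb n p a)) => Hs.
  have [b0 Hb0] := block_end Hs.
  have hb0 : (b0 < size p)%N by case/and5P: Hb0.
  rewrite (bigD1 (Ordinal hb0)) //= Hb0 big1 // => b hb.
  case E: (is_block n p a b) => //.
  move/eqP: hb => hb; exfalso; apply: hb; apply: val_inj; exact: (block_uniq E Hb0).
rewrite big1 // => b _; case E: (is_block n p a b) => //.
by move: Hs; rewrite (block_start E).
Qed.

Definition brb (n : int) (p : seq int) (a : nat) : bool :=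
  [&& startb n p a, (a.+1 < size p)%N & n <= ent p a.+1].

Lemma sum_branches n p (a : 'I_(size p)) :
  (\sum_(b < size p) ((a < b)%N && is_block n p a b))%N = brb n p a.
Proof.
rewrite /brb; case: (boolP (startb n p a)) => Hs /=.
  have [b0 Hb0] := block_end Hs.
  have hb0 : (b0 < size p)%N by case/and5P: Hb0.
  rewrite (bigD1 (Ordinal hb0)) //= Hb0 big1 ?addn0.
    move: (Hb0); case/and5P=> hab _ /forallP hall _ he.
    case: (ltnP a b0) => hlt.
      have hs : (a.+1 < size p)%N by apply: leq_ltn_trans hb0.
      by have := hall (Ordinal hs); rewrite /= hlt ltnW //= => ->; rewrite hs.
    have eab : b0 = a by apply/eqP; rewrite eqn_leq hab hlt.
    move: he; rewrite eab; case/orP=> [/eqP -> | ].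
      by rewrite prednK ?ltnn // (leq_ltn_trans _ hb0).
    by rewrite ltNge => /negbTE ->; rewrite andbF.
  move=> b hb; case E: (is_block n p a b); rewrite ?andbF //.
  move/eqP: hb => hb; exfalso; apply: hb; apply: val_inj; exact: (block_uniq E Hb0).
rewrite big1 // => b _; case E: (is_block n p a b); rewrite ?andbF //.
by move: Hs; rewrite (block_start E).
Qed.
Arguments ent : simpl never.

Definition U (n : int) (p : seq int) : nat :=
  (\sum_(i < (size p).-1) ((ent p i == (n - 1)%R) && (ent p i.+1 == n)))%N.
Definition B (n : int) (p : seq int) : nat :=
  (\sum_(i < (size p).-1)
     [&& ent p i == (n - 1)%R, ent p i.+1 == n, (i.+2 < size p) & ent p i.+2 == (n + 1)%R])%N.

Lemma sc_step M p j : scattering_seq M p -> (j.+1 < size p)%N ->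
  ent p j.+1 = ent p j + 1 \/ ent p j.+1 = ent p j - 1.
Proof. case=> _ _ _ _ hst hj; have := hst j hj; lia. Qed.

Lemma nblocksU M p n : scattering_seq M p -> 0 <= n -> nblocks n p = U n p.
Proof.
move=> sc hn; have sc' := sc; case: sc' => hsz h0 hL hin hst.
rewrite /nblocks (eq_bigr _ (fun a _ => @sum_blocks n p a)).
have [s hs] : exists s, size p = s.+1 by exists (size p).-1; lia.
rewrite /U hs /= big_ord_recl /=.
have -> : startb n p 0 = false.
  by apply/negbTE; rewrite /startb h0; apply/negP => /and3P[_ ? _]; lia.
rewrite add0n; apply eq_bigr => i _.
have hi : (i.+1 < size p)%N by rewrite hs ltnS.
have := sc_step sc hi.
rewrite /startb /bump /= add1n hi /= ?add0n => e.
congr (nat_of_bool _).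
apply/andP/andP => [[h1 h2]|[/eqP h1 /eqP h2]]; [split; apply/eqP; lia | split; lia].
Qed.

Lemma nbranchesB M p n : scattering_seq M p -> 0 <= n -> nbranches n p = B n p.
Proof.
move=> sc hn; have sc' := sc; case: sc' => hsz h0 hL hin hst.
rewrite /nbranches (eq_bigr _ (fun a _ => @sum_branches n p a)).
have [s hs] : exists s, size p = s.+1 by exists (size p).-1; lia.
rewrite /B hs /= big_ord_recl /=.
have -> : brb n p 0 = false.
  by apply/negbTE; rewrite /brb /startb h0; apply/negP => /and3P[/and3P[_ ? _] _ _]; lia.
rewrite add0n; apply eq_bigr => i _.
have hi : (i.+1 < size p)%N by rewrite hs ltnS.
have := sc_step sc hi.
rewrite /brb /startb /bump /= add1n hi /= ?add0n => e.
congr (nat_of_bool _).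
rewrite -hs; case: (boolP (i.+2 < size p)%N) => hi2; last by rewrite /= !andbF.
have := sc_step sc hi2 => e2.
apply/andP/and4P => [[/andP[h1 h2] h3]|[/eqP h1 /eqP h2 _ /eqP h3]].
  by split=> //; apply/eqP; lia.
by split; [apply/andP; split|]; lia.
Qed.

Lemma first_cross M p (v : int) j : scattering_seq M p -> ent p 0 < v ->
  (j < size p)%N -> v <= ent p j ->
  exists i, [/\ (i.+1 < size p)%N, ent p i = v - 1, ent p i.+1 = v &
              forall l, (l <= i)%N -> ent p l < v].
Proof.
move=> sc h0 hj hv.
pose P := fun j => (j < size p)%N && (v <= ent p j).
have exP : exists j, P j by exists j; rewrite /P hj hv.
case: (ex_minnP exP) => j0 /andP[hj0 hv0] hmin.
have hlt : forall l, (l < j0)%N -> ent p l < v.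
  move=> l hl; rewrite ltNge; apply/negP => hl'.
  have := hmin l; rewrite /P hl' andbT => h.
  have : (j0 <= l)%N by apply: h; apply: ltn_trans hl hj0.
  lia.
have j0pos : (0 < j0)%N.
  case: j0 hj0 hv0 {hmin hlt} => // _ hv0; lia.
exists j0.-1; rewrite prednK //.
have hp : ent p j0.-1 < v by apply: hlt; lia.
have hj0' : (j0.-1.+1 < size p)%N by rewrite prednK.
have := sc_step sc hj0'; rewrite prednK // => e.
split; [done | lia | lia | move=> l hl; apply: hlt; lia].
Qed.

Lemma sum_pos (m : nat) (F : nat -> bool) i :
  (i < m)%N -> F i -> (0 < \sum_(j < m) F j)%N.
Proof.
move=> hi hF; rewrite (bigD1 (Ordinal hi)) //= hF.
by rewrite add1n.
Qed.

Lemma sum_pos_ex (m : nat) (F : nat -> bool) :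
  (0 < \sum_(j < m) F j)%N -> exists2 i, (i < m)%N & F i.
Proof.
move=> h.
case: (boolP [exists j : 'I_m, F j]) => [/existsP[j hj]|hn]; first by exists j.
rewrite big1 // in h => j _; case E: (F j) => //.
by move: hn; rewrite negb_exists => /forallP /(_ j); rewrite E.
Qed.

Lemma sum_posO (m : nat) (F : 'I_m -> bool) i :
  F i -> (0 < \sum_(j < m) F j)%N.
Proof. by move=> hF; rewrite (bigD1 i) //= hF add1n. Qed.

Lemma sum_pos_exO (m : nat) (F : 'I_m -> bool) :
  (0 < \sum_(j < m) F j)%N -> exists i, F i.
Proof.
move=> h.
case: (boolP [exists j : 'I_m, F j]) => [/existsP[j hj]|hn]; first by exists j.
rewrite big1 // in h => j _; case E: (F j) => //.
by move: hn; rewrite negb_exists => /forallP /(_ j); rewrite E.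
Qed.

Lemma U0 M p : scattering_seq M p -> U 0 p = 1%N.
Proof.
move=> sc; have sc' := sc; case: sc' => hsz h0 hL hin hst.
have [s hs] : exists s, (size p).-1 = s.+2 by exists (size p - 3)%N; lia.
have h1 : ent p 1 = 0.
  have := hin 1%N isT; rewrite hs => /(_ isT); have := sc_step sc (j := 0) (ltnW hsz); lia.
rewrite /U hs big_ord_recl big1 ?addn0.
  by rewrite /= h0 h1.
move=> i _; rewrite lift0.
have := hin i.+1 isT; rewrite hs => /(_ ltac:(have := ltn_ord i; lia)) hi.
by case: andP => //= -[/eqP ? _]; lia.
Qed.

Lemma U_mono M p n : scattering_seq M p -> (1 <= n)%N ->
  (0 < U n%:Z p)%N -> (0 < U (n.-1)%:Z p)%N.
Proof.
move=> sc hn /sum_pos_exO [i /andP[/eqP e1 /eqP e2]].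
have sc' := sc; case: sc' => hsz h0 hL hin hst.
have hi : (i < size p)%N by have := ltn_ord i; lia.
have [i' [hi' f1 f2 _]] := @first_cross M p (n.-1)%:Z i sc ltac:(lia) hi ltac:(lia).
have hi'' : (i' < (size p).-1)%N by lia.
apply: (@sum_posO _ _ (Ordinal hi'')) => /=.
by rewrite f1 f2 !eqxx.
Qed.

Lemma B_lower M p n : scattering_seq M p ->
  (0 < U (n.+1)%:Z p)%N -> (0 < B n%:Z p)%N.
Proof.
move=> sc /sum_pos_exO [i /andP[/eqP e1 /eqP e2]].
have sc' := sc; case: sc' => hsz h0 hL hin hst.
have hi : (i.+1 < size p)%N by have := ltn_ord i; lia.
have [i0 [hi0 f1 f2 hl]] := @first_cross M p (n.+1)%:Z i.+1 sc ltac:(lia) hi ltac:(lia).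
have i0pos : (0 < i0)%N by case: i0 {hi0 hl} f1 f2 => //; rewrite h0; lia.
have hi0' : (i0.-1.+1 < size p)%N by rewrite prednK //; lia.
have := sc_step sc hi0'; rewrite prednK // => e.
have := hl i0.-1 (leq_pred _) => hlt.
have hj : (i0.-1 < (size p).-1)%N by lia.
apply: (@sum_posO _ _ (Ordinal hj)) => /=.
rewrite prednK // hi0 /=.
by apply/and3P; split; apply/eqP; lia.
Qed.

Lemma B_leU n p : (B n p <= U n p)%N.
Proof.
apply: leq_sum => i _.
case: (ent p i == n - 1); case: (ent p i.+1 == n) => //=; by rewrite ?leq_b1.
Qed.

Lemma B_leU1 M p n : scattering_seq M p -> (B n p <= U (n + 1) p)%N.
Proof.
move=> sc; have sc' := sc; case: sc' => hsz h0 hL hin hst.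
have [s hs] : exists s, (size p).-1 = s.+1 by exists (size p - 2)%N; lia.
have hsz' : size p = s.+2 by lia.
rewrite /B /U hs big_ord_recr big_ord_recl /=.
rewrite hsz' ltnn /= !andbF addn0.
apply: leq_trans (leq_addl _ _).
apply: leq_sum => i _; rewrite (_ : bump 0 i = i.+1) //.
case: and4P => //= -[_ /eqP h1 _ /eqP h2].
by rewrite h1 h2 addrK !eqxx.
Qed.

Lemma B_top M p : scattering_seq M p -> B M%:Z p = 0%N.
Proof.
move=> sc; have sc' := sc; case: sc' => hsz h0 hL hin hst.
apply: big1 => i _; case: and4P => // -[_ _ hi2 /eqP h].
case: (ltnP i.+2 (size p).-1) => h'.
  by have := hin i.+2 isT h'; lia.
have e : (i.+2 = (size p).-1)%N by lia.
by move: h; rewrite e hL; lia.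
Qed.

Fixpoint up (v : int) (s : seq int) : nat :=
  match s with
  | x :: ((y :: _) as t) => ((x == (v - 1)%R) && (y == v) + up v t)%N
  | _ => 0%N
  end.

Fixpoint br (v : int) (s : seq int) : nat :=
  match s with
  | x :: ((y :: z :: _) as t) => ([&& x == (v - 1)%R, y == v & z == (v + 1)%R] + br v t)%N
  | _ => 0%N
  end.

Lemma neq_succ (v : int) : (v + 1 == v) = false.
Proof. by apply/eqP; lia. Qed.
Lemma neq_succ' (v : int) : (v == v + 1) = false.
Proof. by apply/eqP; lia. Qed.

Lemma upE v x t : up v (x :: t) = ((x == (v - 1)%R) && (head (v + 1)%R t == v) + up v t)%N.
Proof. by case: t => [|y t] //=; rewrite neq_succ andbF. Qed.

Lemma brE v x t : br v (x :: t) =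
  ([&& x == (v - 1)%R, head (v + 1)%R t == v & head v (behead t) == (v + 1)%R] + br v t)%N.
Proof.
case: t => [|y [|z t]] //=; first by rewrite neq_succ andbF.
by rewrite neq_succ' !andbF.
Qed.

Lemma U_nil v : U v [::] = 0%N.
Proof. by rewrite /U big_ord0. Qed.
Lemma B_nil v : B v [::] = 0%N.
Proof. by rewrite /B big_ord0. Qed.

Lemma U_cons v x s : U v (x :: s) = ((x == (v - 1)%R) && (head (v + 1)%R s == v) + U v s)%N.
Proof.
case: s => [|y s]; first by rewrite /U /= !big_ord0 neq_succ andbF.
rewrite /U /= big_ord_recl /=; congr addn.
Qed.

Lemma B_small v s : (size s <= 2)%N -> B v s = 0%N.
Proof.
move=> h; apply: big1 => i _.
by rewrite (_ : (i.+2 < size s)%N = false) ?andbF //; apply/negbTE; rewrite -leqNgt; lia.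
Qed.

Lemma B_cons v x s : B v (x :: s) =
  ([&& x == (v - 1)%R, head (v + 1)%R s == v & head v (behead s) == (v + 1)%R] + B v s)%N.
Proof.
case: s => [|y [|z s]].
- by rewrite /B /= !big_ord0 neq_succ andbF.
- by rewrite !B_small //= neq_succ' !andbF.
rewrite /B /= big_ord_recl /=; congr addn.
Qed.

Lemma upU v s : up v s = U v s.
Proof. by elim: s => [|x s IH]; rewrite ?U_nil // upE U_cons IH. Qed.

Lemma brB v s : br v s = B v s.
Proof. by elim: s => [|x s IH]; rewrite ?B_nil // brE B_cons IH. Qed.

Lemma up_glue v p1 x p2 : up v (p1 ++ x :: p2) = (up v (rcons p1 x) + up v (x :: p2))%N.
Proof.
elim: p1 => [|a p1 IH]; first by [].
rewrite cat_cons rcons_cons upE IH [up v (a :: _)]upE addnA; congr (_ + _ + _)%N.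
by case: p1 {IH}.
Qed.

Lemma br_glue v p1 x p2 : x != v ->
  br v (p1 ++ x :: p2) = (br v (rcons p1 x) + br v (x :: p2))%N.
Proof.
move=> hx; elim: p1 => [|a p1 IH]; first by [].
rewrite cat_cons rcons_cons brE IH [br v (a :: _)]brE addnA; congr (_ + _ + _)%N.
case: p1 {IH} => [|c [|d p1]] //=; by rewrite (negbTE hx) !andbF.
Qed.

Lemma eq_sh (a b : int) : (a + 1 == b) = (a == b - 1).
Proof. by apply/eqP/eqP; lia. Qed.

Definition sh (s : seq int) := map (fun x => x + 1) s.

Lemma up_sh v s : up v (sh s) = up (v - 1) s.
Proof.
elim: s => [|x s IH]; first by [].
rewrite /sh map_cons [up v _]upE -/(sh s) IH upE.
congr (_ + _)%N; rewrite eq_sh; congr (_ && _).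
case: s {IH} => [|y s] /=; last by rewrite eq_sh.
by rewrite neq_succ; apply/esym/eqP; lia.
Qed.

Lemma br_sh v s : br v (sh s) = br (v - 1) s.
Proof.
elim: s => [|x s IH]; first by [].
rewrite /sh map_cons [br v _]brE -/(sh s) IH brE.
congr (_ + _)%N; rewrite eq_sh.
case: s {IH} => [|y [|z s]] /=.
- by rewrite neq_succ !andbF; apply/esym; rewrite (_ : (v - 1 + 1 == v - 1) = false) ?andbF //; apply/eqP; lia.
- rewrite eq_sh neq_succ' (_ : (v - 1 == v - 1 + 1) = false) ?andbF //; apply/eqP; lia.
by rewrite !eq_sh (_ : v + 1 - 1 = v - 1 + 1) //; lia.
Qed.

Lemma up_rcons v s y : y != v -> up v (rcons s y) = up v s.
Proof.
move=> hy; case/lastP: s => [|s z] //.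
rewrite -cats1 cat_rcons up_glue /= (negbTE hy) andbF.
by rewrite addn0; exact: addn0.
Qed.

Lemma br_rcons v s y : y != v + 1 -> br v (rcons s y) = br v s.
Proof.
move=> hy; elim: s => [|a s IH]; first by [].
rewrite rcons_cons brE IH [br v (a :: s)]brE; congr (_ + _)%N.
case: s {IH} => [|c [|d s]] //=; first by rewrite neq_succ' !andbF.
by rewrite (negbTE hy) neq_succ' !andbF.
Qed.

Lemma up_low v s : all (fun x => -1 <= x) s -> v <= -1 -> up v s = 0%N.
Proof.
move=> ha hv; elim: s ha => [|x s IH]; first by [].
move=> /andP[hx ha]; rewrite upE IH // (_ : (x == v - 1) = false) //; apply/eqP; lia.
Qed.

Lemma br_low v s : all (fun x => -1 <= x) s -> v <= -1 -> br v s = 0%N.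
Proof.
move=> ha hv; elim: s ha => [|x s IH]; first by [].
move=> /andP[hx ha]; rewrite brE IH // (_ : (x == v - 1) = false) //; apply/eqP; lia.
Qed.

Definition adj (x y : int) : bool := `|y - x| == 1.
Definition gp (h : int) (q : seq int) : Prop :=
  [/\ head 0 q = -1, last 0 q = -1,
      all (fun x => (-1 <= x) && (x <= h)) q & sorted adj q].
Definition ex (q : seq int) : seq int := -1 :: rcons (sh q) (-1).

Lemma gp_cons h q : gp h q -> exists q', q = -1 :: q'.
Proof. by case: q => [[]|x q' [/= -> _ _ _]]; [|exists q']. Qed.

Lemma gp_ge h q : gp h q -> all (fun x => -1 <= x) q.
Proof. by case=> _ _ ha _; apply: sub_all ha => x /andP[]. Qed.

Lemma gp_h h q : gp h q -> -1 <= h.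
Proof.
move=> g; have [q' e] := gp_cons g; case: g => _ _ ha _.
move/allP: ha => /(_ (-1)); rewrite e inE eqxx => /(_ isT) /andP[h1 h2]; lia.
Qed.

Lemma up_ex h v q : gp h q -> 0 <= v -> up v (ex q) = ((v == 0) + up (v - 1) q)%N.
Proof.
move=> g hv; have [q' e] := gp_cons g.
rewrite /ex upE up_rcons; last by apply/eqP; lia.
rewrite up_sh; congr (_ + _)%N; congr nat_of_bool.
rewrite e /sh map_cons rcons_cons /=.
by apply/andP/eqP => [[/eqP ? /eqP ?]|?]; [lia | split; apply/eqP; lia].
Qed.

Lemma up_ex0 h q : gp h q -> up 0 (ex q) = 1%N.
Proof. by move=> g; rewrite (up_ex g) // up_low //; exact: gp_ge g. Qed.

Lemma up_exS h (w : nat) q : gp h q -> up (w.+1)%:Z (ex q) = up w%:Z q.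
Proof.
move=> g; rewrite (up_ex g) //.
by rewrite (_ : (w.+1)%:Z - 1 = w%:Z); [|lia].
Qed.

Lemma br_exS h (w : nat) q : gp h q -> br (w.+1)%:Z (ex q) = br w%:Z q.
Proof.
move=> g; rewrite /ex brE br_rcons; last by apply/eqP; lia.
rewrite br_sh (_ : (w.+1)%:Z - 1 = w%:Z); last by lia.
by rewrite (_ : (-1 == w%:Z) = false) //; apply/eqP; lia.
Qed.

Lemma br_ex0 h q : gp h q -> br 0 (ex q) = (head (-1) (behead q) == 0).
Proof.
move=> g; have [q' e] := gp_cons g.
rewrite /ex brE br_rcons; last by apply/eqP; lia.
rewrite br_sh br_low; last by [].
  rewrite addn0 e /sh map_cons rcons_cons /=.
  case: q' {e} => [|c q'] /=; first by [].
  by rewrite eq_sh.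
exact: gp_ge g.
Qed.

Lemma path_sh x s : path adj (x + 1) (sh s) = path adj x s.
Proof.
elim: s x => [|y s IH] x //=.
rewrite -/(sh s) IH /adj (_ : y + 1 - (x + 1) = y - x) //; lia.
Qed.

Lemma last_sh x s : last (x + 1) (sh s) = last x s + 1.
Proof. by elim: s x => [|y s IH] x //=; rewrite -/(sh s) IH. Qed.

Lemma gp_ex h q : gp h q -> gp (h + 1) (ex q).
Proof.
move=> g; have hh := gp_h g; have [q' e] := gp_cons g.
case: g => h0 hl ha hs; split.
- by [].
- by rewrite /ex /= last_rcons.
- rewrite /ex /= all_rcons /=; apply/and3P; split; [lia|lia|].
  by rewrite all_map; apply: sub_all ha => x /andP[? ?] /=; lia.
rewrite /ex /= rcons_path; apply/andP; split.
  move: hs; rewrite e /sh map_cons /= => hs.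
  by rewrite -/(sh q') path_sh.
move: hl; rewrite e /sh map_cons /= -/(sh q') last_sh => ->.
by rewrite /adj; apply/eqP; lia.
Qed.
Arguments up : simpl never.
Arguments br : simpl never.

Fixpoint fp (es : seq (seq int)) : seq int :=
  if es is e :: es' then e ++ behead (fp es') else [:: -1].

Lemma gp_rcons h e : gp h e -> exists e', e = rcons e' (-1).
Proof.
case/lastP: e => [[]|e' z [_ hl _ _]] //; exists e'.
by rewrite last_rcons in hl; rewrite hl.
Qed.

Lemma gp_fp h es : -1 <= h -> (forall e, e \in es -> gp h e) -> gp h (fp es).
Proof.
move=> hh; elim: es => [|e es IH] hes /=.
  by split=> //=; rewrite andbT; lia.
have ge : gp h e by apply: hes; rewrite inE eqxx.
have gf : gp h (fp es) by apply: IH => x hx; apply: hes; rewrite inE hx orbT.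
have [t et] := gp_cons gf.
have [e1 ee1] := gp_cons ge.
rewrite et /=.
case: ge => h0 hl ha hs; case: gf => h0' hl' ha' hs'.
split.
- by rewrite ee1.
- by rewrite last_cat hl; move: hl'; rewrite et.
- by rewrite all_cat ha /=; move: ha'; rewrite et /= => /andP[].
move: hs hs'; rewrite ee1 et /= cat_path => -> /=.
by move: hl; rewrite ee1 /= => ->.
Qed.

Lemma up_fp h v es : (forall e, e \in es -> gp h e) ->
  up v (fp es) = (\sum_(e <- es) up v e)%N.
Proof.
elim: es => [|e es IH] hes; first by rewrite big_nil.
have ge : gp h e by apply: hes; rewrite inE eqxx.
have hes' : forall x, x \in es -> gp h x by move=> x hx; apply: hes; rewrite inE hx orbT.
have gf : gp h (fp es) by apply: gp_fp (gp_h ge) hes'.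
have [t et] := gp_cons gf.
have [e' ee] := gp_rcons ge.
rewrite big_cons /= -IH // et /= ee cat_rcons up_glue.
by case: (t).
Qed.

Lemma br_fp h v es : 0 <= v -> (forall e, e \in es -> gp h e) ->
  br v (fp es) = (\sum_(e <- es) br v e)%N.
Proof.
move=> hv; elim: es => [|e es IH] hes; first by rewrite big_nil.
have ge : gp h e by apply: hes; rewrite inE eqxx.
have hes' : forall x, x \in es -> gp h x by move=> x hx; apply: hes; rewrite inE hx orbT.
have gf : gp h (fp es) by apply: gp_fp (gp_h ge) hes'.
have [t et] := gp_cons gf.
have [e' ee] := gp_rcons ge.
rewrite big_cons /= -IH // et /= ee cat_rcons br_glue; last by apply/eqP; lia.
by case: (t).
Qed.

Definition leaf : seq int := ex [:: -1].

Definition step (kk bb : nat) (es : seq (seq int)) : seq (seq int) :=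
  if bb is bb'.+1 then map ex (take bb' es) ++ ex (fp (drop bb' es)) :: nseq (kk - bb) leaf
  else nseq kk leaf.

Fixpoint build (kf bf : nat -> nat) (d n : nat) : seq (seq int) :=
  if d is d'.+1 then step (kf n) (bf n) (build kf bf d' n.+1) else [::].

Lemma sum_const_in (T : eqType) (s : seq T) (F : T -> nat) c :
  (forall e, e \in s -> F e = c) -> (\sum_(e <- s) F e)%N = (c * size s)%N.
Proof.
elim: s => [|x s IH] hF; first by rewrite big_nil muln0.
rewrite big_cons hF ?inE ?eqxx // IH ?mulnS // => e he.
by apply: hF; rewrite inE he orbT.
Qed.

Lemma sec_ex h q : gp h q -> head (-1) (behead (ex q)) = 0.
Proof. by move=> g; have [q' ->] := gp_cons g. Qed.

Lemma sec_fp h e es : gp h e -> head (-1) (behead e) = 0 -> head (-1) (behead (fp (e :: es))) = 0.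
Proof.
move=> g; have [e' ->] := gp_cons g; case: e' => [|c e'] //=.
Qed.

Lemma gp_leaf (h : int) : -1 <= h -> gp h [:: -1].
Proof. by move=> hh; split=> //=; rewrite andbT; lia. Qed.

Lemma build_inv kf bf M :
  (forall n, bf n <= kf n)%N ->
  (forall n, bf n <= kf n.+1)%N ->
  (forall n, 0 < kf n.+1 -> 0 < bf n)%N ->
  (forall n, M < n -> kf n = 0)%N ->
  forall d n, (n + d = M.+1)%N ->
  [/\ size (build kf bf d n) = kf n,
      forall e, e \in build kf bf d n -> exists q, e = ex q /\ gp (d%:Z - 2) q,
      forall v : nat, (\sum_(e <- build kf bf d n) up v%:Z e)%N = kf (n + v)%N
    & forall v : nat, (\sum_(e <- build kf bf d n) br v%:Z e)%N = bf (n + v)%N].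
Proof.
move=> H1 H2 H3 H4; elim=> [|d IH] n hnd.
  rewrite addn0 in hnd; rewrite /=.
  have Z : forall v, kf (n + v)%N = 0%N by move=> v; apply: H4; lia.
  split=> [|//|v|v]; rewrite ?big_nil.
  - by have := Z 0%N; rewrite addn0.
  - by rewrite Z.
  by have := H1 (n + v)%N; rewrite Z; case: (bf _).
have [Is Im Iu Ib] := IH n.+1 ltac:(lia).
rewrite /=; set es := build kf bf d n.+1.
have hd : -1 <= d%:Z - 1 by lia.
have cast : (d.+1)%:Z - 2 = d%:Z - 1 by lia.
have gpe : forall e, e \in es -> gp (d%:Z - 1) e.
  move=> e /Im [q [-> g]]; have := gp_ex g.
  by rewrite (_ : d%:Z - 2 + 1 = d%:Z - 1) //; lia.
have Hm : forall e, e \in step (kf n) (bf n) es -> exists q, e = ex q /\ gp (d.+1%:Z - 2) q.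
  rewrite cast /step; case: (bf n) => [|bb'] e.
    by rewrite mem_nseq => /andP[_ /eqP ->]; exists [:: -1]; split=> //; apply: gp_leaf.
  rewrite mem_cat => /orP[/mapP[q hq ->]|]; first by exists q; split=> //; apply: gpe (mem_take hq).
  rewrite inE => /orP[/eqP ->|].
    exists (fp (drop bb' es)); split=> //; apply: gp_fp hd _ => x hx.
    exact: gpe (mem_drop hx).
  by rewrite mem_nseq => /andP[_ /eqP ->]; exists [:: -1]; split=> //; apply: gp_leaf.
have Hs : size (step (kf n) (bf n) es) = kf n.
  rewrite /step; have := H1 n; have := H2 n; case: (bf n) => [|bb'] h2 h1.
    by rewrite size_nseq.
  rewrite size_cat size_map size_takel /= ?size_nseq; [lia|].
  by rewrite /es Is; lia.
split=> //.
- case=> [|w].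
    rewrite addn0 (@sum_const_in _ _ _ 1%N) ?mul1n ?Hs // => e /Hm [q [-> g]].
    exact: up_ex0 g.
  rewrite addnS -addSn -Iu -/es /step.
  case E: (bf n) => [|bb'].
    have k0 : kf n.+1 = 0%N by case: (posnP (kf n.+1)) => // h; have := H3 n h; rewrite E.
    have -> : es = [::] by apply/size0nil; rewrite /es Is.
    rewrite big_nil (@sum_const_in _ _ _ 0%N) // => e.
    by rewrite mem_nseq => /andP[_ /eqP ->]; rewrite /leaf (up_exS _ (gp_leaf (h := -1) _)).
  rewrite big_cat big_map big_cons (@sum_const_in _ (nseq _ _) _ 0%N); last first.
    by move=> e; rewrite mem_nseq => /andP[_ /eqP ->]; rewrite /leaf (up_exS _ (gp_leaf (h := -1) _)).
  rewrite mul0n /= addn0 (up_exS _ (gp_fp hd _)); last by move=> x hx; apply: gpe (mem_drop hx).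
  rewrite (up_fp (h := d%:Z - 1)); last by move=> x hx; apply: gpe (mem_drop hx).
  rewrite -{3}(cat_take_drop bb' es) big_cat; congr (_ + _)%N.
  by rewrite big_seq_cond [RHS]big_seq_cond; apply: eq_bigr => q /andP[hq _]; rewrite (up_exS _ (gpe _ (mem_take hq))).
case=> [|w].
  rewrite addn0 /step; case E: (bf n) => [|bb'].
    rewrite (@sum_const_in _ _ _ 0%N) // => e.
    by rewrite mem_nseq => /andP[_ /eqP ->]; rewrite /leaf (br_ex0 (gp_leaf (h := -1) _)).
  have hb : (bb' < size es)%N by rewrite /es Is; have := H2 n; rewrite E.
  rewrite big_cat big_map big_cons (@sum_const_in _ (nseq _ _) _ 0%N); last first.
    by move=> e; rewrite mem_nseq => /andP[_ /eqP ->]; rewrite /leaf (br_ex0 (gp_leaf (h := -1) _)).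
  rewrite (@sum_const_in _ _ _ 1%N); last first.
    move=> q hq; have gq := gpe _ (mem_take hq); rewrite (br_ex0 gq).
    by have /Im [q' [-> g']] := mem_take hq; rewrite (sec_ex g').
  rewrite size_takel ?(ltnW hb) // mul1n mul0n /= addn0.
  have gf : gp (d%:Z - 1) (fp (drop bb' es)) by apply: gp_fp hd _ => x hx; apply: gpe (mem_drop hx).
  rewrite (br_ex0 gf).
  move: (mem_drop (s := es) (n0 := bb')); case E2: (drop bb' es) => [|e1 rest] hdrop.
    by move: hb; rewrite -subn_gt0 -size_drop E2.
  have he1 : e1 \in es by apply: hdrop; rewrite inE eqxx.
  have /Im [q1 [ee1 g1]] := he1.
  by rewrite (sec_fp _ (gpe _ he1)) ?ee1 ?(sec_ex g1) // addn1.
rewrite addnS -addSn -Ib -/es /step.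
case E: (bf n) => [|bb'].
  have k0 : kf n.+1 = 0%N by case: (posnP (kf n.+1)) => // h; have := H3 n h; rewrite E.
  have -> : es = [::] by apply/size0nil; rewrite /es Is.
  rewrite big_nil (@sum_const_in _ _ _ 0%N) // => e.
  by rewrite mem_nseq => /andP[_ /eqP ->]; rewrite /leaf (br_exS _ (gp_leaf (h := -1) _)).
rewrite big_cat big_map big_cons (@sum_const_in _ (nseq _ _) _ 0%N); last first.
  by move=> e; rewrite mem_nseq => /andP[_ /eqP ->]; rewrite /leaf (br_exS _ (gp_leaf (h := -1) _)).
rewrite mul0n /= addn0 (br_exS _ (gp_fp hd _)); last by move=> x hx; apply: gpe (mem_drop hx).
rewrite (br_fp (h := d%:Z - 1)) //; last by move=> x hx; apply: gpe (mem_drop hx).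
rewrite -{3}(cat_take_drop bb' es) big_cat; congr (_ + _)%N.
by rewrite big_seq_cond [RHS]big_seq_cond; apply: eq_bigr => q /andP[hq _]; rewrite (br_exS _ (gpe _ (mem_take hq))).
Qed.
Arguments up : simpl never.
Arguments br : simpl never.

Lemma sc_ex M q : gp (M%:Z - 1) q -> scattering_seq M (ex q).
Proof.
move=> g; have [q' eq] := gp_cons g.
have g' := gp_ex g; case: g' => _ hl _ hs.
case: g => _ _ ha _.
have hsz : size (ex q) = (size q).+2 by rewrite /ex /= size_rcons /sh size_map.
split.
- by rewrite hsz eq.
- by [].
- by rewrite /ent nth_last.
- move=> j hj0 hj; rewrite hsz /= in hj.
  case: j hj0 hj => [//|j] _ hj.
  rewrite /ent /ex /= nth_rcons /sh size_map; rewrite ltnS in hj; rewrite hj (nth_map 0) //.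
  move/allP: ha => /(_ _ (mem_nth 0 hj)) /andP[h1 h2].
  by apply/andP; split; [rewrite -lerBlDr sub0r | rewrite -lerBrDr].
move=> j hj; move: hs; rewrite /ex /= => /(pathP 0) /(_ j).
rewrite -/(ex q) /= size_rcons /sh size_map.
have hj' : (j < (size q).+1)%N by rewrite hsz in hj.
move=> /(_ hj') /eqP.
by rewrite /ent.
Qed.

Lemma kappaE M p (n : 'I_M.+1) : scattering_seq M p -> kappa M p n = U n p.
Proof. by move=> sc; rewrite ffunE (nblocksU sc). Qed.

Lemma betaE M p (n : 'I_M.+1) : scattering_seq M p -> beta M p n = B n p.
Proof. by move=> sc; rewrite ffunE (nbranchesB sc). Qed.

Lemma nec_LM M p : scattering_seq M p -> LM (kappa M p).
Proof.
move=> sc; split; first by rewrite kappaE // (U0 sc).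
move=> n hn; rewrite !kappaE // inordK; last by have := ltn_ord n; lia.
exact: U_mono sc hn.
Qed.

Lemma nec M p (n : 'I_M.+1) : scattering_seq M p ->
  (Posz (minn 1 (ktilde (kappa M p) n)) <= Posz (beta M p n))%R /\
  (Posz (beta M p n) <= Posz (minn (kappa M p n) (ktilde (kappa M p) n)))%R.
Proof.
move=> sc; rewrite !lez_nat betaE // kappaE // /ktilde.
case: ltnP => hn.
  rewrite kappaE // inordK // leq_min B_leU /=; split.
    case: (posnP (U n.+1 p)) => [->|h]; first by rewrite minn0.
    by rewrite (minn_idPl (h : (1 <= _)%N)) (B_lower sc h).
  by rewrite (_ : (n.+1)%:Z = n%:Z + 1) ?(B_leU1 _ sc) //; lia.
have -> : nat_of_ord n = M by have := ltn_ord n; lia.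
by rewrite (B_top sc) !minn0.
Qed.

Lemma suff M (k : {ffun 'I_M.+1 -> nat}) (b : {ffun 'I_M.+1 -> int}) : LM k ->
  (forall n : 'I_M.+1,
      (Posz (minn 1 (ktilde k n)) <= b n)%R /\ (b n <= Posz (minn (k n) (ktilde k n)))%R) ->
  exists p : seq int,
    [/\ scattering_seq M p, kappa M p = k & (fun n => Posz (beta M p n)) =1 b].
Proof.
move=> [hk0 hmono] hb.
pose kf n := if (n <= M)%N then k (inord n) else 0%N.
pose bf n := if (n <= M)%N then absz (b (inord n)) else 0%N.
have ktE : forall n, (n < M)%N -> ktilde k (inord n) = k (inord n.+1).
  by move=> n hn; rewrite /ktilde inordK ?hn //; lia.
have ktM : ktilde k (inord M) = 0%N by rewrite /ktilde inordK // ltnn.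
have hbn : forall n : 'I_M.+1, [/\ (0 <= b n)%R,
     (minn 1 (ktilde k n) <= absz (b n))%N & (absz (b n) <= minn (k n) (ktilde k n))%N].
  move=> n; have [l u] := hb n.
  have b0 : (0 <= b n)%R by apply: le_trans l.
  split=> //.
    by rewrite -lez_nat abszE ger0_norm.
  by rewrite -lez_nat abszE ger0_norm.
have H1 : forall n, (bf n <= kf n)%N.
  move=> n; rewrite /bf /kf; case: (leqP n M) => // hn.
  by have [_ _ u] := hbn (inord n); exact: (leq_trans u (geq_minl _ _)).
have H2 : forall n, (bf n <= kf n.+1)%N.
  move=> n; rewrite /bf /kf; case: (leqP n M) => hn //.
  case: (leqP n.+1 M) => hn1.
    by have [_ _ u] := hbn (inord n); rewrite ktE // in u; exact: (leq_trans u (geq_minr _ _)).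
  have eM : n = M by lia.
  by have [_ _ u] := hbn (inord n); rewrite eM in u *; rewrite ktM minn0 in u.
have H3 : forall n, (0 < kf n.+1)%N -> (0 < bf n)%N.
  move=> n; rewrite /bf /kf; case: (leqP n.+1 M) => hn1 // hk.
  rewrite (_ : (n <= M)%N = true); last by lia.
  have [_ l _] := hbn (inord n); rewrite ktE // in l.
  by apply: leq_trans l; rewrite leq_min hk.
have H4 : forall n, (M < n)%N -> kf n = 0%N.
  by move=> n hn; rewrite /kf leqNgt hn.
have [Is Im Iu Ib] := build_inv H1 H2 H3 H4 (d := M.+1) (n := 0%N) erefl.
have ord0E : inord 0 = ord0 :> 'I_M.+1 by apply: val_inj; rewrite /= inordK.
move: Is Im Iu Ib; case: (build kf bf M.+1 0) => [|e [|e' es]] Is Im Iu Ib.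
- by move: Is; rewrite /kf /= ord0E hk0.
- have [q [ee g]] := Im e (mem_head _ _).
  have g' : gp (M%:Z - 1) q by rewrite (_ : M%:Z - 1 = M.+1%:Z - 2) //; lia.
  have sc : scattering_seq M e by rewrite ee; exact: sc_ex g'.
  exists e; split=> //.
    apply/ffunP => n; rewrite kappaE // -upU.
    have := Iu n; rewrite big_seq1 add0n /kf => ->.
    by rewrite -ltnS ltn_ord inord_val.
  move=> n; rewrite betaE // -brB.
  have := Ib n; rewrite big_seq1 add0n /bf => ->.
  rewrite -ltnS ltn_ord inord_val.
  by have [b0 _ _] := hbn n; rewrite abszE ger0_norm.
- by move: Is; rewrite /kf /= ord0E hk0.
Qed.

Close Scope ring_scope.

Theorem proposition6p1 (M : nat) (hM : (1 <= M)%N) :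
  (forall k : {ffun 'I_M.+1 -> nat},
      (exists p : seq int, scattering_seq M p /\ kappa M p = k) <-> LM k) /\
  (forall k : {ffun 'I_M.+1 -> nat}, LM k ->
     forall b : {ffun 'I_M.+1 -> int},
       (exists p : seq int,
           [/\ scattering_seq M p, kappa M p = k & (fun n => Posz (beta M p n)) =1 b])
       <->
       (forall n : 'I_M.+1,
           (Posz (minn 1 (ktilde k n)) <= b n)%R /\
           (b n <= Posz (minn (k n) (ktilde k n)))%R)).
Proof.
split.
  move=> k; split.
    by case=> p [sc <-]; exact: nec_LM sc.
  move=> hLM; pose b := [ffun n : 'I_M.+1 => Posz (minn 1 (ktilde k n))].
  have [|p [sc hk _]] := @suff M k b hLM; last by exists p.
  move=> n; rewrite ffunE; split=> //; rewrite lez_nat leq_min geq_minr andbT.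
  rewrite /ktilde; case: ltnP => hn; last by rewrite minn0.
  case: (posnP (k (inord n.+1))) => [->|h]; first by rewrite minn0.
  case: hLM => _ /(_ (inord n.+1)); rewrite inordK //= => /(_ isT h).
  rewrite (_ : inord n = n); last by apply: inord_val.
  by move=> h1; apply: leq_trans (geq_minl _ _) h1.
move=> k hLM b; split.
  case=> p [sc <- hb] n; rewrite -!hb; exact: nec.
by move=> hbd; exact: suff.
Qed.
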